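(* Let $n,m\in\mathbb N$ with $n<m$, and let $\mathbb P^T_n=\{p^{(k)}_n:k\in\mathbb N\}$, $\mathbb P^T_m=\{p^{(k)}_m:k\in\mathbb N\}$. Then $\mathbb P^T_n\cap\mathbb P^T_m\neq\emptyset$ if and only if $m\in\mathbb P^T_n$. Moreover, if $m\in\mathbb P^T_n$, say $m=p^{(k)}_n$, then $\mathbb P^T_m\subset\mathbb P^T_n$ and $\mathbb P^T_n\setminus\mathbb P^T_m=\{p^{(1)}_n,p^{(2)}_n,\dots,p^{(k)}_n\}$.
   Context: Let $p_n$ denote the $n$-th prime number. Define $p^{(0)}_n=n$ and recursively $p^{(k+1)}_n=p_{p^{(k)}_n}$ for $k\in\mathbb N_0$. *)

(* Defs.v *)
From mathcomp Require Import all_boot.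
Set Implicit Arguments. Unset Strict Implicit. Unset Printing Implicit Defensive.

Lemma exists_prime_above (x : nat) : exists p, (x < p) && prime p.
Proof. by case: (prime_above x) => p H1 H2; exists p; rewrite H1 H2. Defined.

Definition next_prime (x : nat) : nat := ex_minn (exists_prime_above x).

(* p_n, the n-th prime, for n >= 1: p_1 = 2, p_2 = 3, ...
   (p_0 = 1 is a meaningless placeholder, never used by the statement.) *)
Definition nth_prime (n : nat) : nat := iter n next_prime 1.

Definition iter_prime (k n : nat) : nat := iter k nth_prime n.

Definition PT (n : nat) : nat -> Prop :=
  fun x => exists k, 0 < k /\ x = iter_prime k n.

(* Main.v *)
Require Import Defs.
From mathcomp Require Import all_boot.
From mathcomp Require Import zify.
Set Implicit Arguments. Unset Strict Implicit.

Lemma lt_next x : x < next_prime x.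
Proof. rewrite /next_prime; case: ex_minnP => p /andP[] //. Qed.

Lemma nthS x : nth_prime x < nth_prime x.+1.
Proof. rewrite /nth_prime iterS; exact: lt_next. Qed.

Lemma lt_nth x : x < nth_prime x.
Proof.
elim: x => [|x IH] //. have := nthS x. lia.
Qed.

Lemma nth_mono x y : x < y -> nth_prime x < nth_prime y.
Proof.
elim: y => [|y IH] // H. rewrite ltnS leq_eqVlt in H.
case/orP: H => [/eqP->|H]; first exact: nthS.
exact: ltn_trans (IH H) (nthS y).
Qed.

Lemma nth_inj : injective nth_prime.
Proof.
move=> x y E; case: (ltngtP x y) => // H.
  by have := nth_mono H; rewrite E ltnn.
by have := nth_mono H; rewrite E ltnn.
Qed.

Lemma iterD' a b n : iter_prime (a + b) n = iter_prime a (iter_prime b n).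
Proof. by rewrite /iter_prime iterD. Qed.

Lemma iter_gt t x : 0 < t -> x < iter_prime t x.
Proof.
case: t => // t _; elim: t => [|t IH]; first exact: lt_nth.
have -> : iter_prime t.+2 x = nth_prime (iter_prime t.+1 x) by [].
exact: ltn_trans IH (lt_nth _).
Qed.

Lemma iter_inj t x y : iter_prime t x = iter_prime t y -> x = y.
Proof.
elim: t x y => [|t IH] x y // E. apply: IH. apply: nth_inj. exact: E.
Qed.

Lemma iter_mono i j x : i < j -> iter_prime i x < iter_prime j x.
Proof.
move=> H; have -> : j = (j - i) + i by lia.
rewrite iterD'; apply: iter_gt; lia.
Qed.

Lemma iter_idx_inj i j x : iter_prime i x = iter_prime j x -> i = j.
Proof.
move=> E; case: (ltngtP i j) => // H.
  by have := iter_mono x H; rewrite E ltnn.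
by have := iter_mono x H; rewrite E ltnn.
Qed.

Theorem theorem5 (n m : nat) (hn : 0 < n) (hnm : n < m) :
  ((exists x, PT n x /\ PT m x) <-> PT n m) /\
  (forall k : nat, 0 < k -> m = iter_prime k n ->
     (forall x, PT m x -> PT n x) /\
     (forall x, (PT n x /\ ~ PT m x) <->
                (exists j, 1 <= j <= k /\ x = iter_prime j n))).
Proof.
split.
  split.
    move=> [x [[i [hi ->]] [j [hj E]]]].
    case: (leqP j i) => H.
      have Ei : i = j + (i - j) by lia.
      move: E; rewrite Ei iterD' => /iter_inj Em.
      case Hd: (i - j) => [|d].
        by move: Em; rewrite Hd /= => Em; rewrite Em ltnn in hnm.
      by exists d.+1; split => //; rewrite -Em Hd.
    have Ej : j = i + (j - i) by lia.
    move: E; rewrite Ej iterD' => /iter_inj Em.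
    have := iter_gt m (_ : 0 < j - i); rewrite -Em => /(_ ltac:(lia)) H2.
    lia.
  move=> [k [hk Em]]; exists (iter_prime k.+1 n); split.
    by exists k.+1.
  exists 1; split => //; by rewrite Em -(iterD' 1 k).
move=> k hk Em; split.
  move=> x [j [hj ->]]; exists (j + k); split; first lia.
  by rewrite iterD' Em.
move=> x; split.
  move=> [[i [hi ->]] NP]; exists i; split => //.
  apply/andP; split => //. case: (leqP i k) => // H; exfalso; apply: NP.
  exists (i - k); split; first lia.
  by rewrite Em -iterD' subnK // ltnW.
move=> [j [/andP[h1 h2] ->]]; split.
  by exists j.
move=> [i [hi E]]; move: E; rewrite Em -iterD' => /iter_idx_inj; lia.
Qed.
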